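(* Let $G$ and $H$ be graphs with $|V(G)|\ge2$, and let $S\subseteq E(G\times H)$. Define the graph $G^*$ as follows: <ul> <li>its vertex set is the set of $H$-fibers $\{{}_xH: x\in V(G)\}$;</li> <li>two distinct fibers ${}_xH$ and ${}_yH$ are adjacent if and only if $G\times H-S$ contains at least one edge with one end in ${}_xH$ and the other end in ${}_yH$.</li> </ul> If $G^*$ is disconnected, then one of the following holds: <ol> <li>$|S|>2\kappa'(G)e(H)$;</li> <li>$|S|=2\kappa'(G)e(H)$ and $S$ is the set induced by some minimum edge cut of $G$.</li> </ol>
   Context: All graphs are finite, simple and undirected. $e(H)=|E(H)|$. The direct product $G\times H$ has vertex set $V(G)\times V(H)$. Two vertices $(x,u),(y,v)$ are adjacent if and only if $xy\in E(G)$ and $uv\in E(H)$. For $x\in V(G)$, the $H$-fiber is ${}_xH=\{(x,u):u\in V(H)\}$. For a graph $G$ with at least two vertices, an edge cut is the set $E(X,Y)$ of all edges joining $X$ and $Y$, for a partition $(X,Y)$ of $V(G)$ into nonempty parts. $\kappa'(G)$ is the minimum size of an edge cut, and a minimum edge cut is an edge cut of that size. For $S_0\subseteq E(G)$, the set induced by $S_0$ is $\{(x,u)(y,v),(x,v)(y,u): xy\in S_0,\ uv\in E(H)\}$. *)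

(* Defs.v *)
From mathcomp Require Import all_boot.
Set Implicit Arguments. Unset Strict Implicit. Unset Printing Implicit Defensive.

Definition simple_graph (T : finType) (e : rel T) : Prop :=
  symmetric e /\ irreflexive e.

Definition edges (T : finType) (e : rel T) : {set {set T}} :=
  [set f : {set T} | [exists x : T, exists y : T, e x y && (f == [set x; y])]].

Definition dprod_rel (T U : finType) (eG : rel T) (eH : rel U) : rel (T * U) :=
  fun p q => eG p.1 q.1 && eH p.2 q.2.

Definition edge_cut (T : finType) (e : rel T) (X : {set T}) : {set {set T}} :=
  [set f : {set T} | [exists x : T, exists y : T,
     [&& x \in X, y \notin X, e x y & f == [set x; y]]]].

Definition proper_part (T : finType) (X : {set T}) : bool :=
  (X != set0) && (X != setT).

(* kappa'(G): minimum size of an edge cut (cuts have size <= e(G), so the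
   seed #|edges e| is harmless whenever |V| >= 2) *)
Definition kappa' (T : finType) (e : rel T) : nat :=
  \big[minn/#|edges e|]_(X : {set T} | proper_part X) #|edge_cut e X|.

Definition min_edge_cut (T : finType) (e : rel T) (C : {set {set T}}) : Prop :=
  exists X : {set T}, proper_part X /\ C = edge_cut e X /\ #|C| = kappa' e.

Definition induced_set (T U : finType) (eH : rel U) (S0 : {set {set T}})
  : {set {set (T * U)}} :=
  [set f : {set (T * U)} | [exists x : T, exists y : T, exists u : U, exists v : U,
     [&& [set x; y] \in S0, eH u v &
        (f == [set (x, u); (y, v)]) || (f == [set (x, v); (y, u)])]]].

Definition star_rel (T U : finType) (eG : rel T) (eH : rel U)
  (S : {set {set (T * U)}}) : rel T :=
  fun x y => (x != y) && [exists u : U, exists v : U,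
     dprod_rel eG eH (x, u) (y, v) && ([set (x, u); (y, v)] \notin S)].

Definition graph_connected (T : finType) (e : rel T) : Prop :=
  forall x y : T, connect e x y.

(* Main.v *)
Require Import Defs.
From mathcomp Require Import all_boot.

Lemma set2_eqP (T : finType) (a b c d : T) :
  [set a; b] = [set c; d] -> (a = c /\ b = d) \/ (a = d /\ b = c).
Proof.
move=> E.
have ha : a \in [set c; d] by rewrite -E !inE eqxx.
have hb : b \in [set c; d] by rewrite -E !inE eqxx orbT.
have hc : c \in [set a; b] by rewrite E !inE eqxx.
have hd : d \in [set a; b] by rewrite E !inE eqxx orbT.
move: ha hb hc hd; rewrite !inE.
move=> /orP[/eqP ea|/eqP ea] /orP[/eqP eb|/eqP eb] /orP[/eqP ec|/eqP ec] /orP[/eqP ed|/eqP ed];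
  first [left; split; congruence | right; split; congruence].
Qed.

Lemma bigmin_le_seq (I : eqType) (r : seq I) (P : pred I) (F : I -> nat) s i :
  i \in r -> P i -> \big[minn/s]_(j <- r | P j) F j <= F i.
Proof.
elim: r => [|j r IH] //; rewrite inE big_cons => /orP[/eqP <-|ir] Pi.
  by rewrite Pi geq_minl.
case: (P j); last exact: IH.
by rewrite geq_min IH ?orbT.
Qed.

Lemma kappa_le (T : finType) (e : rel T) (X : {set T}) :
  proper_part X -> kappa' e <= #|edge_cut e X|.
Proof.
move=> pX; rewrite /kappa'; apply: bigmin_le_seq => //.

Qed.

Lemma cut_sub (T : finType) (e : rel T) (X : {set T}) :
  edge_cut e X \subset edges e.
Proof.
apply/subsetP=> f; rewrite !inE => /existsP[x /existsP[y /and4P[_ _ exy ef]]].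
by apply/existsP; exists x; apply/existsP; exists y; rewrite exy.
Qed.

Lemma kappa_attained (T : finType) (e : rel T) :
  1 < #|T| -> exists X : {set T}, proper_part X /\ #|edge_cut e X| = kappa' e.
Proof.
move=> hT.
have [x0 [y0 nxy]] : exists x0 y0 : T, x0 != y0.
  case/card_gt1P: hT => x [y [_ _ nxy]]; by exists x, y.
have p0 : proper_part [set x0].
  rewrite /proper_part; apply/andP; split.
    by apply/set0Pn; exists x0; rewrite inE.
  apply/eqP=> E; have : y0 \in [set x0] by rewrite E inE.
  by rewrite inE eq_sym (negbTE nxy).

case: (@arg_minnP _ [set x0] (@proper_part T) (fun X => #|edge_cut e X|) p0) => X pX minX.
exists X; split => //; apply/eqP; rewrite eqn_leq kappa_le // andbT.
rewrite /kappa'; apply: (big_ind (fun k => #|edge_cut e X| <= k)).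
- idtac.
apply: subset_leq_card; exact: cut_sub.
- by move=> a b ha hb; rewrite leq_min ha hb.
- by move=> Y pY; apply: minX.
Qed.

Lemma card_oriented_gen (U : finType) (e : rel U) (r : U -> nat) :
  injective r -> simple_graph e ->
  #|[set q : U * U | e q.1 q.2]| = 2 * #|edges e|.
Proof.
move=> rinj; case=> sym irr.
pose P1 := [set q : U * U | e q.1 q.2 && (r q.1 < r q.2)].
pose P2 := [set q : U * U | e q.1 q.2 && (r q.2 < r q.1)].
have E : [set q : U * U | e q.1 q.2] = P1 :|: P2.
  apply/setP=> [[u v]]; rewrite !inE /=.
  case euv: (e u v) => //=.
  have : u != v by apply: contraTneq euv => ->; rewrite irr.
  move=> nuv; case: (ltngtP (r u) (r v)) => // h; case/negP: nuv.
  by apply/eqP; apply: rinj.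
have D : P1 :&: P2 = set0.
  apply/setP=> [[u v]]; rewrite !inE /=.
  by case: (e u v) => //=; case: ltngtP.
have C2 : #|P2| = #|P1|.
  have -> : P2 = [set (q.2, q.1) | q in P1].
    apply/setP=> [[u v]]; apply/idP/imsetP.
      rewrite !inE /= => /andP[h1 h2]; exists (v, u) => //.
      by rewrite !inE /= sym h1.
    case=> [[a b]]; rewrite !inE /= => /andP[h1 h2] [-> ->].
    by rewrite sym h1.
  by apply: card_imset => [[a b] [c d]] /= [-> ->].
have C1 : #|P1| = #|edges e|.
  have -> : edges e = [set [set q.1; q.2] | q in P1].
    apply/setP=> f; rewrite inE; apply/idP/imsetP.
      case/existsP=> x /existsP[y /andP[exy /eqP ->]].
      have nxy : x != y by apply: contraTneq exy => ->; rewrite irr.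
      case: (ltngtP (r x) (r y)) => h.
      - by exists (x, y); rewrite // inE /= exy h.
      - by exists (y, x); [rewrite inE /= sym exy h | rewrite setUC].
      - by case/negP: nxy; apply/eqP; apply: rinj.
    case=> [[a b]]; rewrite inE /= => /andP[h1 _] ->.
    by apply/existsP; exists a; apply/existsP; exists b; rewrite h1 eqxx.
  symmetry; apply: card_in_imset => [[a b] [c d]]; rewrite !inE /= => /andP[_ h1] /andP[_ h2].
  case/set2_eqP => [[-> ->] //|[ea eb]].
  by move: h1; rewrite ea eb; move: h2; case: ltngtP.
by rewrite E cardsU D cards0 subn0 C2 C1 addnn mul2n.
Qed.

Lemma card_oriented (U : finType) (e : rel U) : simple_graph e ->
  #|[set q : U * U | e q.1 q.2]| = 2 * #|edges e|.
Proof.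
apply: (@card_oriented_gen U e (fun u => nat_of_ord (enum_rank u))).
by move=> a b /val_inj /enum_rank_inj.
Qed.

Theorem lemma1 (T U : finType) (eG : rel T) (eH : rel U)
  (HG : simple_graph eG) (HH : simple_graph eH) (hT : 2 <= #|T|)
  (S : {set {set (T * U)}}) (hS : S \subset edges (dprod_rel eG eH)) :
  ~ graph_connected (star_rel eG eH S) ->
  (#|S| > 2 * kappa' eG * #|edges eH|) \/
  (#|S| = 2 * kappa' eG * #|edges eH| /\
   exists C : {set {set T}}, min_edge_cut eG C /\ S = induced_set eH C).
Proof.
move=> nconn.
set R := star_rel eG eH S.
have [x0 [y0 nc]] : exists x0 y0, ~~ connect R x0 y0.
  have : ~~ [forall x, forall y, connect R x y].
    apply/negP => /forallP h; apply: nconn => x y; exact: (forallP (h x)).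
  case/forallPn => x0 /forallPn [y0 h]; by exists x0, y0.
pose X := [set z | connect R x0 z].
have pX : proper_part X.
  rewrite /proper_part; apply/andP; split.
    by apply/set0Pn; exists x0; rewrite inE connect0.
  apply/eqP => E; have : y0 \in X by rewrite E inE.
  by rewrite inE (negbTE nc).
have cross : forall x y u v, x \in X -> y \notin X -> eG x y -> eH u v ->
    [set (x, u); (y, v)] \in S.
  move=> x y u v xX yX exy euv; apply/negPn/negP => nS.
  move: yX; rewrite inE; apply/negP/negPn.
  move: xX; rewrite inE => cx; apply: (connect_trans cx); apply: connect1.
  rewrite /R /star_rel; apply/andP; split.
    by apply/negP => /eqP exy'; move: exy; rewrite exy'; case: HG => _ ->.
  by apply/existsP; exists u; apply/existsP; exists v; rewrite /dprod_rel /= exy euv nS.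
pose PG := [set p : T * T | [&& p.1 \in X, p.2 \notin X & eG p.1 p.2]].
pose PH := [set q : U * U | eH q.1 q.2].
pose phi := fun p : (T * T) * (U * U) => [set (p.1.1, p.2.1); (p.1.2, p.2.2)].
pose I' := phi @: setX PG PH.
have Isub : I' \subset S.
  apply/subsetP => f /imsetP [[[x y] [u v]]]; rewrite !inE /= => /andP[/and3P[xX yX exy] euv] ->.
  by apply: cross => //; rewrite inE.
have cardPG : #|PG| = #|edge_cut eG X|.
  have -> : edge_cut eG X = [set [set p.1; p.2] | p in PG].
    apply/setP => f; rewrite inE; apply/idP/imsetP.
      case/existsP => x /existsP [y /and4P [xX yX exy /eqP ->]].
      by exists (x, y); rewrite // inE /= xX yX exy.
    case => [[x y]]; rewrite inE /= => /and3P [xX yX exy] ->.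
    by apply/existsP; exists x; apply/existsP; exists y; rewrite xX yX exy eqxx.
  symmetry; apply: card_in_imset => [[a b] [c d]]; rewrite !inE /=.
  move=> /and3P [aX bX _] /and3P [cX dX _]; case/set2_eqP => [[-> ->] //|[ea eb]].
  by move: aX dX; rewrite ea => ->.
have cardI : #|I'| = #|edge_cut eG X| * (2 * #|edges eH|).
  rewrite card_in_imset ?cardsX ?cardPG ?card_oriented //.
  move=> [[a b] [u v]] [[c d] [u' v']]; rewrite !inE /= /phi /=.
  move=> /andP [/and3P [aX bX _] _] /andP [/and3P [cX dX _] _].
  case/set2_eqP => [[[-> ->] [-> ->]] //|[[ea _] _]].
  by move: aX dX; rewrite ea => ->.
have Iind : induced_set eH (edge_cut eG X) = I'.
  apply/setP => f; rewrite inE; apply/idP/imsetP.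
    case/existsP => x /existsP [y /existsP [u /existsP [v /and3P [cxy euv hf]]]].
    move: cxy; rewrite inE => /existsP [x' /existsP [y' /and4P [xX yX exy /eqP E]]].
    have evu : eH v u by case: HH => sy _; rewrite sy.
    have inPG : (x', y') \in PG by rewrite inE /= xX yX exy.
    case/set2_eqP: E => [[ex ey]|[ex ey]]; subst x y; case/orP: hf => /eqP ->.
    - by exists ((x', y'), (u, v)); rewrite // in_setX inPG inE.
    - by exists ((x', y'), (v, u)); rewrite // in_setX inPG inE.
    - by exists ((x', y'), (v, u)); [rewrite in_setX inPG inE | rewrite /phi /= setUC].
    - by exists ((x', y'), (u, v)); [rewrite in_setX inPG inE | rewrite /phi /= setUC].
  case => [[[x y] [u v]]]; rewrite !inE /= => /andP [/and3P [xX yX exy] euv] ->.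
  apply/existsP; exists x; apply/existsP; exists y; apply/existsP; exists u.
  apply/existsP; exists v; rewrite euv eqxx /= andbT.
  by rewrite inE; apply/existsP; exists x; apply/existsP; exists y; rewrite !inE xX yX exy eqxx.
have kX := @kappa_le T eG X pX.
have leS : #|I'| <= #|S| by apply: subset_leq_card.
have low : 2 * kappa' eG * #|edges eH| <= #|S|.
  apply: leq_trans leS; rewrite cardI mulnCA mulnA leq_mul2r.
  by rewrite leq_mul2l kX !orbT.
case: (ltngtP (2 * kappa' eG * #|edges eH|) #|S|) => [lt|lt|eq]; first by left.
  by move: (leq_ltn_trans low lt); rewrite ltnn.
right; split => //.
case: (posnP #|edges eH|) => [e0|epos].
  case: (@kappa_attained T eG hT) => Y [pY cY].
  exists (edge_cut eG Y); split; first by exists Y.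
  have S0 : S = set0.
    apply/setP => f; rewrite inE; apply/negP => fS.
    move/subsetP: hS => /(_ f fS); rewrite inE => /existsP [p /existsP [q /andP [pq _]]].
    move: pq; rewrite /dprod_rel => /andP [_ huv].
    have : [set p.2; q.2] \in edges eH.
      by rewrite inE; apply/existsP; exists p.2; apply/existsP; exists q.2; rewrite huv eqxx.
    move=> h; have : 0 < #|edges eH| by apply/card_gt0P; exists [set p.2; q.2].
    by rewrite e0.
  rewrite S0; apply/setP => f; rewrite inE; apply/esym/negP; rewrite inE.
  case/existsP => x /existsP [y /existsP [u /existsP [v /and3P [_ euv _]]]].
  have : [set u; v] \in edges eH.
    by rewrite inE; apply/existsP; exists u; apply/existsP; exists v; rewrite euv eqxx.
  move=> h; have : 0 < #|edges eH| by apply/card_gt0P; exists [set u; v].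
  by rewrite e0.
have cX : #|edge_cut eG X| = kappa' eG.
  apply/eqP; rewrite eqn_leq kX andbT.
  have : #|I'| <= 2 * kappa' eG * #|edges eH| by rewrite eq.
  by rewrite cardI mulnCA mulnA leq_mul2r leq_mul2l /= (negbTE (lt0n_neq0 epos)).
exists (edge_cut eG X); split; first by exists X.
rewrite Iind; apply/esym/eqP; rewrite eqEcard Isub /= cardI.
by rewrite -eq cX mulnCA mulnA.
Qed.
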